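(* Let $\mathbb{K}=(G,M,I)$ be a finite formal context, and let $\cdot'$ denote derivation in $\mathbb{K}$ and $\cdot^{!}$ derivation in $BC(\mathbb{K})$. For every object $g\in G$, setting $\overline{A}:=\{\overline m\in\overline{\mathcal{M}(M)}\mid (g,m)\notin I\}$, we have $\overline{A}^{!}=g^{!}=g'$. In particular every intent of $\mathbb{K}$ is an intent of $BC(\mathbb{K})$, and the objects of $G$ are reducible in $BC(\mathbb{K})$ in the sense that the object intents of $G$ are intersections of object intents of new objects $\overline m$.
   Context: For a formal context $\mathbb{K}=(G,M,I)$, derivation operators: $A'=\{m\in M\mid\forall g\in A:(g,m)\in I\}$, $B'=\{g\in G\mid\forall m\in B:(g,m)\in I\}$; intents are sets $B\subseteq M$ with $B''=B$; $g'$ abbreviates $\{g\}'$. For $m,n\in M$ write $m\ge_{\mathbb{K}}n$ iff $\{m\}'\supseteq\{n\}'$. Let $\mathcal{M}(M)$ be the set of attributes $m$ whose attribute concept $(\{m\}',\{m\}'')$ is meet-irreducible in the concept lattice of $\mathbb{K}$, and $\overline{\mathcal{M}(M)}=\{\overline m\mid m\in\mathcal{M}(M)\}$ new elements. The Birkhoff completion of $\mathbb{K}$ is $BC(\mathbb{K}):=\big(G\cup\overline{\mathcal{M}(M)},M,I\cup\{(\overline m,n)\in\overline{\mathcal{M}(M)}\times M\mid m\not\ge_{\mathbb{K}}n\}\big)$. For $\overline A\subseteq\overline{\mathcal{M}(M)}$, $\overline A^{!}=\{n\in M\mid \forall\overline m\in\overline A: m\not\ge_{\mathbb{K}} n\}$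 (with $\emptyset^{!}=M$). *)

(* Defs.v *)
From mathcomp Require Import all_boot.
Set Implicit Arguments. Unset Strict Implicit. Unset Printing Implicit Defensive.

Section FCA.
Variables (G M : finType).

Definition intent (I : G -> M -> bool) (A : {set G}) : {set M} :=
  [set m | [forall g in A, I g m]].
Definition extent (I : G -> M -> bool) (B : {set M}) : {set G} :=
  [set g | [forall m in B, I g m]].

Definition is_concept (I : G -> M -> bool) (c : {set G} * {set M}) : bool :=
  (intent I c.1 == c.2) && (extent I c.2 == c.1).

Definition meet_irreducible (I : G -> M -> bool) (c : {set G} * {set M}) : bool :=
  [&& is_concept I c, c.1 != setT &
  ~~ [exists x : {set G} * {set M}, exists y : {set G} * {set M},
        [&& is_concept I x, is_concept I y, c.1 \proper x.1, c.1 \proper y.1 &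
            [forall z : {set G} * {set M},
               (is_concept I z && (z.1 \subset x.1) && (z.1 \subset y.1))
                 ==> (z.1 \subset c.1)]]]].

Definition attr_concept (I : G -> M -> bool) (m : M) : {set G} * {set M} :=
  (extent I [set m], intent I (extent I [set m])).

Definition Mirr (I : G -> M -> bool) : {set M} :=
  [set m | meet_irreducible I (attr_concept I m)].

Definition geK (I : G -> M -> bool) (m n : M) : bool :=
  extent I [set n] \subset extent I [set m].

Definition Mbar (I : G -> M -> bool) := {m : M | m \in Mirr I}.

Definition BCobj (I : G -> M -> bool) := (G + Mbar I)%type.
Definition BCI (I : G -> M -> bool) (x : BCobj I) (n : M) : bool :=
  match x with
  | inl g => I g n
  | inr mb => ~~ geK I (val mb) n
  end.

Definition bang (I : G -> M -> bool) (Abar : {set Mbar I}) : {set M} :=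
  [set n | [forall mb in Abar, ~~ geK I (val mb) n]].

End FCA.

(* Main.v *)
Require Import Defs.
From mathcomp Require Import all_boot.

Section H.
Variables (G M : finType) (I : G -> M -> bool).

Lemma extentP (B : {set M}) g : reflect (forall m, m \in B -> I g m) (g \in extent I B).
Proof. rewrite inE; exact: forall_inP. Qed.
Lemma intentP (A : {set G}) m : reflect (forall g, g \in A -> I g m) (m \in intent I A).
Proof. rewrite inE; exact: forall_inP. Qed.

Lemma eie (B : {set M}) : extent I (intent I (extent I B)) = extent I B.
Proof.
apply/setP=> g; apply/extentP/extentP => H m Hm.
- apply: H; apply/intentP => g' /extentP; exact.
- by move/intentP: Hm; apply; apply/extentP.
Qed.

Lemma iei (A : {set G}) : intent I (extent I (intent I A)) = intent I A.
Proof.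
apply/setP=> m; apply/intentP/intentP => H g Hg.
- apply: H; apply/extentP => m' /intentP; exact.
- by move/extentP: Hg; apply; apply/intentP.
Qed.

Lemma extentS (B1 B2 : {set M}) : B1 \subset B2 -> extent I B2 \subset extent I B1.
Proof.
move=> S; apply/subsetP => g /extentP H; apply/extentP => m Hm.
by apply: H; apply: (subsetP S).
Qed.

Lemma key g n : ~~ I g n -> exists mb : Mbar I, ~~ I g (val mb) && geK I (val mb) n.
Proof.
move=> Hgn.
have Pn : (fun m => ~~ I g m && geK I m n) n by rewrite Hgn /geK subxx.
case: (@arg_maxnP _ n (fun m => ~~ I g m && geK I m n) (fun m => #|extent I [set m]|) Pn) => m /andP[Hgm Hmn] Hmax.
have gm : g \notin extent I [set m].
  by apply/negP => /extentP H; move: Hgm; rewrite H ?set11.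
suff Hmirr : m \in Mirr I by exists (exist _ m Hmirr); rewrite /= Hgm Hmn.
rewrite inE /meet_irreducible /attr_concept /is_concept /= eqxx eie eqxx /=.
apply/andP; split.
  by apply/eqP => E; move: gm; rewrite E inE.
apply/negP => /existsP[x /existsP[y /and5P[cx cy px py /forallP Hz]]].
have gin : forall x : {set G} * {set M}, is_concept I x ->
    extent I [set m] \proper x.1 -> g \in x.1.
  move=> z /andP[_ /eqP E] pz; apply/negPn/negP => gz.
  move: (gz); rewrite -E inE negb_forall_in => /existsP[k /andP[kz Igk]].
  have sk : z.1 \subset extent I [set k].
    rewrite -E; apply: extentS; by rewrite sub1set.
  have pk := proper_sub_trans pz sk.
  have := Hmax k; rewrite Igk /geK (subset_trans Hmn (proper_sub pk)) => /(_ isT) /=.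
  by rewrite leqNgt (proper_card pk).
have gx := gin x cx px; have gy := gin y cy py.
have sub2 : forall x : {set G} * {set M}, is_concept I x -> g \in x.1 ->
    extent I (intent I [set g]) \subset x.1.
  move=> z /andP[/eqP E1 /eqP E2] gz; rewrite -E2; apply: extentS.
  apply/subsetP => k kz; apply/intentP => g' /set1P ->.
  by move: gz; rewrite -E2 => /extentP; apply.
move: (Hz (extent I (intent I [set g]), intent I [set g])).
rewrite /is_concept /= iei !eqxx /= (sub2 x cx gx) (sub2 y cy gy) /= => S.
move: gm; rewrite (subsetP S) //.
by apply/extentP => k /intentP; apply; rewrite set11.
Qed.

End H.

Theorem mainTheorem6 (G M : finType) (I : G -> M -> bool) :
  (forall g : G,
     let Abar := [set mb : Mbar I | ~~ I g (val mb)] in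
     [/\ bang Abar = intent (@BCI G M I) [set inl g],
         intent (@BCI G M I) [set inl g] = intent I [set g] &
         intent I [set g] =
           \bigcap_(mb in Abar) intent (@BCI G M I) [set inr mb]])
  /\
  (forall B : {set M}, intent I (extent I B) = B ->
     intent (@BCI G M I) (extent (@BCI G M I) B) = B).
Proof.
have E1 : forall g, intent (@BCI G M I) [set inl g] = intent I [set g].
  move=> g; apply/setP => n; rewrite !inE.
  apply/forall_inP/forall_inP => H x /set1P ->.
  - exact: (H (inl g) (set11 _)).
  - exact: (H g (set11 _)).
have E0 : forall g, bang [set mb : Mbar I | ~~ I g (val mb)] = intent I [set g].
  move=> g; apply/setP => n; apply/idP/idP.
  - rewrite inE => /forall_inP H; apply/intentP => x /set1P ->; apply/negPn/negP => Hgn.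
    case: (@key _ _ I _ _ Hgn) => mb /andP[Hm Hge].
    by move: (H mb); rewrite inE Hm Hge => /(_ isT).
  - move/intentP => H; rewrite inE; apply/forall_inP => mb; rewrite inE => Hm; apply/negP => Hge.
    have gn : g \in extent I [set n].
      by apply/extentP => k /set1P ->; apply: H; rewrite set11.
    move/(subsetP Hge): gn => /extentP gm.
    by move: Hm; rewrite gm ?set11.
split.
  move=> g Abar; rewrite E1 E0; split=> //.
  apply/setP => n; rewrite -E0 inE; apply/forall_inP/bigcapP => H mb Hm.
  - rewrite inE; apply/forall_inP => x /set1P -> /=; exact: H.
  - by move: (H mb Hm); rewrite inE => /forall_inP /(_ _ (set11 _)).
move=> B HB; apply/setP => n; apply/idP/idP.
- apply: contraLR => nB; rewrite inE negb_forall_in.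
  move: nB; rewrite -{1}HB inE negb_forall_in => /existsP[g /andP[gB Ign]].
  apply/existsP; exists (inl g); rewrite /= Ign andbT.
  by rewrite inE; apply/forall_inP => m mB; move/extentP: gB; apply.
- move=> nB; rewrite inE; apply/forall_inP => x.
  by rewrite inE => /forall_inP; apply.
Qed.
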